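(* Let $\mathbf{L}\in\mathbb{R}^{N_1\times N_2}$ satisfy Assumption 1 with $n$ clusters of sizes $n_1,\dots,n_n$, and suppose $\operatorname{rank}(\mathbf{L})=r$. Assume $r/n\ge 18\log\max_i n_i$ and $n_i\ge 96\,\frac{r}{n}\log n_i$ for all $1\le i\le n$. Then $$\mathbb{P}\left[\mu_v<\frac{1}{n}\cdot\frac{0.5\,N_2}{\min_i n_i}\right]\le 2\sum_{i=1}^n n_i^{-5},$$ where $\mu_v$ is the row-space incoherence parameter of $\mathbf{L}$.
   Context: Assumption 1: $\mathbf{L}=[\mathbf{U}_1\mathbf{Q}_1\ \cdots\ \mathbf{U}_n\mathbf{Q}_n]$, where for each $i$, $\mathbf{U}_i\in\mathbb{R}^{N_1\times r/n}$ has column space a uniformly random $r/n$-dimensional subspace of $\mathbb{R}^{N_1}$, and $\mathbf{Q}_i\in\mathbb{R}^{r/n\times n_i}$ has row space a uniformly random $r/n$-dimensional subspace of $\mathbb{R}^{n_i}$ (all drawn independently), with $\sum_{i=1}^n n_i=N_2$ and $\min_i n_i$ much larger than $r/n$. The compact SVD of $\mathbf{L}$ is $\mathbf{U}\boldsymbol{\Sigma}\mathbf{V}^T$ with $\mathbf{V}\in\mathbb{R}^{N_2\times r}$; $\mathbf{e}_i$ is the $i$-th standard basis vector of $\mathbb{R}^{N_2}$; the row-space incoherence parameter $\mu_v$ is the smallest constant such that $\max_{1\le i\le N_2}\|\mathbf{e}_i^T\mathbf{V}\|_2^2\le\mu_v r/N_2$. *)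

(* Defs.v *)
From HB Require Import structures.
From mathcomp Require Import all_boot all_order all_algebra.
From mathcomp Require Import all_classical all_reals all_analysis.
Set Implicit Arguments. Unset Strict Implicit. Unset Printing Implicit Defensive.
Import Order.TTheory GRing.Theory Num.Theory.
Local Open Scope ring_scope.
Local Open Scope classical_set_scope.

Section Defs.
Context {R : realType} {d : measure_display} {T : measurableType d}.
Variable (P : probability T R).

Definition rowproj (a b : nat) (X : 'M[R]_(a, b)) : 'M[R]_b :=
  X^T *m invmx (X *m X^T) *m X.

Definition mx_event (m n : nat) (X : T -> 'M[R]_(m, n))
  (B : 'I_m -> 'I_n -> set R) : set T :=
  [set w | forall (a : 'I_m) (b : 'I_n), B a b (X w a b)].

Definition rand_mx (m n : nat) (X : T -> 'M[R]_(m, n)) : Prop :=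
  forall (a : 'I_m) (b : 'I_n), measurable_fun setT (fun w => X w a b).

(* The row space of X is a uniformly random a-dimensional subspace of R^b:
   X has rank a almost surely, and the law of the orthogonal projector onto
   its row space (which determines the subspace) is invariant under every
   orthogonal change of coordinates O (row space of X O is (row space X) O),
   i.e. it is the O(b)-invariant (= uniform) distribution on the Grassmannian.
   Laws on 'M_b are compared on measurable rectangles (a pi-system generating
   the Borel sigma-algebra). *)
Definition unif_rowspace (a b : nat) (X : T -> 'M[R]_(a, b)) : Prop :=
  P [set w | \rank (X w) != a] = 0%E /\
  forall O : 'M[R]_b, O^T *m O = 1%:M ->
  forall B : 'I_b -> 'I_b -> set R, (forall j k, measurable (B j k)) ->
    P (mx_event (fun w => rowproj (X w)) B) =
    P (mx_event (fun w => O^T *m rowproj (X w) *m O) B).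

Definition indep_mx (I : finType) (m n : I -> nat)
  (X : forall i, T -> 'M[R]_(m i, n i)) : Prop :=
  forall B : forall i, 'I_(m i) -> 'I_(n i) -> set R,
    (forall i a b, measurable (B i a b)) ->
  forall J : {set I},
    P (\big[setI/setT]_(i in J) mx_event (X i) (B i)) =
    (\prod_(i in J) P (mx_event (X i) (B i)))%E.

End Defs.

(* The family (U_1,...,U_n,Q_1,...,Q_n) indexed by 'I_n + 'I_n. *)
Definition UQdim1 (n N1 k : nat) (nn : 'I_n -> nat) (s : 'I_n + 'I_n) : nat :=
  match s with inl _ => N1 | inr _ => k end.
Definition UQdim2 (n N1 k : nat) (nn : 'I_n -> nat) (s : 'I_n + 'I_n) : nat :=
  match s with inl _ => k | inr i => nn i end.
Definition UQfam {R : realType} {T : Type} (n N1 k : nat) (nn : 'I_n -> nat)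
  (U : 'I_n -> T -> 'M[R]_(N1, k)) (Q : forall i, T -> 'M[R]_(k, nn i))
  (s : 'I_n + 'I_n) : T -> 'M[R]_(UQdim1 N1 k nn s, UQdim2 N1 k nn s) :=
  match s return T -> 'M[R]_(UQdim1 N1 k nn s, UQdim2 N1 k nn s) with
  | inl i => U i | inr i => Q i end.

Definition clusterL {R : realType} (n N1 k : nat) (nn : 'I_n -> nat)
  (U : 'I_n -> 'M[R]_(N1, k)) (Q : forall i, 'M[R]_(k, nn i))
  : 'M[R]_(N1, \sum_(i < n) nn i) :=
  mxrow (fun i => U i *m Q i).

(* V has orthonormal columns spanning the row space of L (the V factor of a
   compact SVD L = U Sigma V^T). *)
Definition is_rowV {R : realType} (m N : nat) (L : 'M[R]_(m, N))
  (V : 'M[R]_(N, \rank L)) : Prop :=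
  V^T *m V = 1%:M /\ (V^T == L)%MS.
Arguments is_rowV {R m N} L V.

Definition rowV {R : realType} (m N : nat) (L : 'M[R]_(m, N))
  : 'M[R]_(N, \rank L) :=
  match boolp.pselect (exists V : 'M[R]_(N, \rank L), is_rowV L V) with
  | left h => projT1 (boolp.cid h)
  | right _ => 0
  end.

(* Row-space incoherence: smallest mu with max_i ||e_i^T V||^2 <= mu r / N2,
   i.e. mu_v = (N2 / r) * max_i ||e_i^T V||^2, with r = rank L. *)
Definition mu_v {R : realType} (m N : nat) (L : 'M[R]_(m, N)) : R :=
  (N%:R / (\rank L)%:R) *
  \big[Num.max/0]_(i < N) \sum_(j < \rank L) (rowV L i j) ^+ 2.

(* Main.v *)
Require Import Defs.
From HB Require Import structures.
From mathcomp Require Import all_boot all_order all_algebra.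
From mathcomp Require Import all_classical all_reals all_analysis.
From mathcomp Require Import ring lra.
Import Order.TTheory GRing.Theory Num.Theory.
Local Open Scope ring_scope.

Set Implicit Arguments. Unset Strict Implicit. Unset Printing Implicit Defensive.
Section LA.
Variable R : realType.

Lemma mx_gram_eq0 m n (X : 'M[R]_(m, n)) : X *m X^T = 0 -> X = 0.
Proof.
move=> h; apply/matrixP => a b; rewrite mxE.
have : (X *m X^T) a a = 0 by rewrite h mxE.
rewrite mxE => /eqP; rewrite psumr_eq0; last by move=> j _; rewrite mxE -expr2 sqr_ge0.
move=> /allP /(_ b (mem_index_enum _)) /=; rewrite mxE -expr2 sqrf_eq0 => /eqP->//.
Qed.

Lemma gram_ge0 m n (X : 'M[R]_(m, n)) a : 0 <= (X *m X^T) a a.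
Proof. by rewrite mxE; apply: sumr_ge0 => j _; rewrite mxE -expr2 sqr_ge0. Qed.

Lemma gram1_gt0 n (z : 'M[R]_(1, n)) : z != 0 -> 0 < (z *m z^T) 0 0.
Proof.
move=> zn0; rewrite lt0r gram_ge0 andbT; apply: contra zn0 => /eqP hs.
by apply/eqP/mx_gram_eq0; apply/matrixP => i j; rewrite !ord1 hs mxE.
Qed.

Lemma free_gram_unit m n (X : 'M[R]_(m, n)) : row_free X -> X *m X^T \in unitmx.
Proof.
move=> fX; rewrite -row_free_unit -kermx_eq0.
set K := kermx _.
have hK : K *m X *m (K *m X)^T = 0.
  by rewrite trmx_mul mulmxA -(mulmxA K X) mulmx_ker mul0mx.
have := mx_gram_eq0 hK => /eqP; rewrite mulmx_free_eq0 //.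
Qed.

Definition rproj (a b : nat) (X : 'M[R]_(a, b)) : 'M[R]_b :=
  X^T *m invmx (X *m X^T) *m X.

Lemma rproj_id m n (X : 'M[R]_(m, n)) : row_free X -> X *m rproj X = X.
Proof.
move=> fX; rewrite /rproj !mulmxA mulmxV ?mul1mx //; exact: free_gram_unit.
Qed.

Lemma rproj_tr m n (X : 'M[R]_(m, n)) : (rproj X)^T = rproj X.
Proof.
by rewrite /rproj !trmx_mul trmxK trmx_inv trmx_mul trmxK mulmxA.
Qed.

Lemma rproj_uniq m n r (X : 'M[R]_(m, n)) (V : 'M[R]_(n, r)) :
  row_free X -> V^T *m V = 1%:M -> (V^T == X)%MS -> V *m V^T = rproj X.
Proof.
move=> fX VV /andP[/submxP[A eA] /submxP[B eB]].
have AB : A *m B = 1%:M.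
  by rewrite -[LHS]mulmx1 -VV !mulmxA -(mulmxA A) -eB -eA.
have GB : X *m X^T = B *m B^T.
  by rewrite eB trmx_mul trmxK !mulmxA -(mulmxA B) VV mulmx1.
have uG : B *m B^T \in unitmx by rewrite -GB free_gram_unit.
rewrite /rproj GB eB trmx_mul trmxK.
have -> : V *m B^T *m invmx (B *m B^T) *m (B *m V^T)
   = V *m (A *m B *m (B^T *m invmx (B *m B^T) *m B)) *m V^T.
  by rewrite AB mul1mx !mulmxA.
have hB : B *m (B^T *m invmx (B *m B^T) *m B) = B.
  by rewrite !mulmxA mulmxV // mul1mx.
by rewrite -(mulmxA A) hB AB mulmx1.
Qed.

Lemma free_of_inj m n (X : 'M[R]_(m, n)) :
  (forall (A : 'M[R]_(m, m)), A *m X = 0 -> A = 0) -> row_free X.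
Proof. by move=> h; rewrite -kermx_eq0; apply/eqP/h; exact: mulmx_ker. Qed.

Lemma sub_col_u m1 m2 n (A : 'M[R]_(m1, n)) (B : 'M[R]_(m2, n)) : (A <= col_mx A B)%MS.
Proof. by have := submx_refl (col_mx A B); rewrite col_mx_sub => /andP[]. Qed.
Lemma sub_col_d m1 m2 n (A : 'M[R]_(m1, n)) (B : 'M[R]_(m2, n)) : (B <= col_mx A B)%MS.
Proof. by have := submx_refl (col_mx A B); rewrite col_mx_sub => /andP[]. Qed.

Lemma gram_schmidt n m (X : 'M[R]_(m, n)) : row_free X ->
  exists Y : 'M[R]_(m, n), Y *m Y^T = 1%:M /\ (Y == X)%MS.
Proof.
elim: m X => [|m IH].
  move=> X fX; exists X; split; last by rewrite /eqmx submx_refl.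
  by apply/matrixP => i; case: i.
change (forall X : 'M[R]_(1 + m, n), row_free X ->
  exists Y : 'M[R]_(1 + m, n), Y *m Y^T = 1%:M /\ (Y == X)%MS).
move=> X fX.
pose x : 'M[R]_(1, n) := usubmx X.
pose X' : 'M[R]_(m, n) := dsubmx X.
have eX : X = col_mx x X' by rewrite vsubmxK.
have fX' : row_free X'.
  apply: free_of_inj => A hA.
  have : row_mx (0 : 'M[R]_(m, 1)) A *m X = 0.
    by rewrite eX mul_row_col mul0mx add0r hA.
  move/eqP; rewrite mulmx_free_eq0 // => /eqP/(congr1 rsubmx).
  by rewrite row_mxKr linear0.
have [Y' [YY eY']] := IH X' fX'.
have /andP[/submxP[D eD] _] := eY'.
pose z := x - x *m Y'^T *m Y'.
have zY : z *m Y'^T = 0.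
  by rewrite /z mulmxBl -!mulmxA YY mulmx1 subrr.
have zn0 : z != 0.
  apply/eqP => z0.
  have : row_mx (1 : 'M[R]_1) (- (x *m Y'^T *m D)) *m X = 0.
    rewrite eX mul_row_col mul1mx mulNmx.
    have -> : x *m Y'^T *m D *m X' = x *m Y'^T *m Y' by rewrite eD mulmxA.
    by [].
  move/eqP; rewrite mulmx_free_eq0 // => /eqP/(congr1 lsubmx).
  rewrite row_mxKl linear0 => /matrixP/(_ 0 0); rewrite !mxE /=.
  by move/eqP; rewrite oner_eq0.
set s := (z *m z^T) 0 0.
have s_gt0 : 0 < s by apply: gram1_gt0.
pose c := (Num.sqrt s)^-1.
have cs : c * c * s = 1.
  rewrite /c -invfM -expr2 sqr_sqrtr ?mulVf // ?gt_eqF // ltW //.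
exists (col_mx (c *: z) Y'); split.
  rewrite tr_col_mx mul_col_row !linearZ /= -!scalemxAl zY.
  rewrite (_ : Y' *m z^T = (z *m Y'^T)^T); last by rewrite trmx_mul trmxK.
  rewrite zY trmx0 !scaler0 YY [z *m z^T]mx11_scalar -/s.
  rewrite (_ : c *: (c *: s%:M) = (1 : 'M[R]_1)); last first.
    by rewrite scalerA -scalemx1 scalerA cs scale1r.
  by rewrite -scalar_mx_block.
have sX'X : (X' <= X)%MS by rewrite eX; exact: sub_col_d.
have sxX : (x <= X)%MS by rewrite eX; exact: sub_col_u.
have sY'X' : (Y' <= X')%MS by case/andP: eY'.
have sX'Y' : (X' <= Y')%MS by case/andP: eY'.
set Y := col_mx (c *: z) Y'.
have sY'Y : (Y' <= Y)%MS by exact: sub_col_d.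
have szY : (c *: z <= Y)%MS by exact: sub_col_u.
have cn0 : c != 0 by rewrite invr_eq0 sqrtr_eq0 -ltNge.
apply/andP; split.
  rewrite (col_mx_sub (c *: z) Y' X) (submx_trans sY'X' sX'X) andbT.
  apply: scalemx_sub; rewrite /z addmx_sub // -scaleN1r scalemx_sub //.
  by rewrite (submx_trans (submxMl _ _)) // (submx_trans sY'X' sX'X).
rewrite eX (col_mx_sub x X' Y) (submx_trans sX'Y' sY'Y) andbT.
have -> : x = c^-1 *: (c *: z) + x *m Y'^T *m Y'.
  by rewrite scalerA mulVf // scale1r /z subrK.
rewrite addmx_sub //; first exact: scalemx_sub szY.
exact: submx_trans (submxMl _ _) sY'Y.
Qed.
End LA.

Section RowV.
Variable R : realType.
Lemma rowV_ex m N (L : 'M[R]_(m, N)) : exists V : 'M[R]_(N, \rank L), is_rowV L V.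
Proof.
have [Y [YY eY]] := gram_schmidt (row_base_free L).
exists Y^T; split; first by rewrite trmxK.
by rewrite trmxK; apply/eqmxP; apply: eqmx_trans (eqmxP eY) (eq_row_base L).
Qed.

Lemma rowV_spec m N (L : 'M[R]_(m, N)) : is_rowV L (rowV L).
Proof.
rewrite /rowV; case: boolp.pselect => [h|h]; first exact: projT2 (boolp.cid h).
by exfalso; apply: h; exact: rowV_ex.
Qed.

Lemma mu_vE m N p (L : 'M[R]_(m, N)) (X : 'M[R]_(p, N)) :
  row_free X -> (X == L)%MS ->
  mu_v L = (N%:R / (\rank L)%:R) * \big[Num.max/0]_(i < N) (rproj X) i i.
Proof.
move=> fX eXL; have [VV eV] := rowV_spec L.
have eV' : ((rowV L)^T == X)%MS by apply/eqmxP; apply: eqmx_trans (eqmxP eV) (eqmx_sym (eqmxP eXL)).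
rewrite /mu_v -(rproj_uniq fX VV eV'); congr (_ * _); apply: eq_bigr => i _.
by rewrite mxE; apply: eq_bigr => j _; rewrite mxE expr2.
Qed.
End RowV.

Section Block.
Import tagnat.
Variable R : realType.
Variables (N1 n k : nat) (nn : 'I_n -> nat).
Variables (U : 'I_n -> 'M[R]_(N1, k)) (Q : forall i, 'M[R]_(k, nn i)).

Let Ub : 'M[R]_(N1, \sum_(i < n) k) := \mxrow_(i < n) U i.
Let dQ i j : 'M[R]_(k, nn j) := if i == j then conform_mx 0 (Q i) else 0.
Let Qd : 'M[R]_(\sum_(i < n) k, \sum_(i < n) nn i) := \mxblock_(i, j) dQ i j.
Let dD i j : 'M[R]_(nn i, k) :=
  if i == j then conform_mx 0 ((Q i)^T *m invmx (Q i *m (Q i)^T)) else 0.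
Let Dd : 'M[R]_(\sum_(i < n) nn i, \sum_(i < n) k) := \mxblock_(i, j) dD i j.
Let M : 'M[R]_(\sum_(i < n) nn i) := \mxdiag_(i < n) rproj (Q i).
Let L := clusterL U Q.

Lemma sum_dQ p (A : forall i, 'M[R]_(p, k)) j :
  \sum_i (A i *m dQ i j) = A j *m Q j.
Proof.
rewrite (bigD1 j) //= /dQ eqxx conform_mx_id big1 ?addr0 // => i /negPf ->.
by rewrite mulmx0.
Qed.

Lemma L_fact : L = Ub *m Qd.
Proof.
rewrite /L /clusterL /Ub /Qd mul_mxrow_mxblock; apply: eq_mxrow => j.
by rewrite sum_dQ.
Qed.

Lemma M_fact : M = Dd *m Qd.
Proof.
rewrite /M /Dd /Qd /mxdiag mul_mxblock; apply: eq_mxblock => i l.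
rewrite (bigD1 i) //= /dD eqxx conform_mx_id big1 ?addr0; last first.
  by move=> j /negPf; rewrite eq_sym => ->; rewrite mul0mx.
rewrite /dQ; case: eqVneq => [<-|_]; last by rewrite mulmx0.
by rewrite !conform_mx_id.
Qed.

Hypothesis rkL : \rank L = (n * k)%N.

Lemma sumk : (\sum_(i < n) k)%N = (n * k)%N.
Proof. by rewrite sum_nat_const card_ord. Qed.

Lemma Qd_free : row_free Qd.
Proof.
rewrite /row_free eqn_leq rank_leq_row /=.
have := mxrankM_maxr Ub Qd; rewrite -L_fact rkL.
by move=> h; apply: leq_trans h; rewrite sumk.
Qed.

Lemma Q_free i : row_free (Q i).
Proof.
apply: free_of_inj => A hA.
pose Y : 'M[R]_(k, \sum_(j < n) k) :=
  \mxrow_(j < n) (if j == i then conform_mx 0 A else 0).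
have : Y *m Qd = 0.
  rewrite /Y /Qd mul_mxrow_mxblock -(mxrow0 (q_ := nn)); apply: eq_mxrow => l.
  rewrite (bigD1 i) //= eqxx conform_mx_id big1 ?addr0; last first.
    by move=> j /negPf ->; rewrite mul0mx.
  by rewrite /dQ; case: eqVneq => [<-|_]; rewrite ?conform_mx_id ?hA ?mulmx0.
move/eqP; rewrite mulmx_free_eq0 ?Qd_free // => /eqP /(congr1 (fun B => submxrow B i)).
by rewrite mxrowK eqxx conform_mx_id => ->; rewrite /submxrow; apply/matrixP=> a b; rewrite !mxE.
Qed.

Lemma Qd_sub : (Qd <= L)%MS.
Proof.
have sLQ : (L <= Qd)%MS by rewrite L_fact submxMl.
have := mxrank_leqif_sup sLQ => [[_ <-]].
by rewrite rkL (eqP Qd_free) sumk.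
Qed.

Lemma M_sub : (M <= L)%MS.
Proof. by rewrite M_fact (submx_trans (submxMl _ _) Qd_sub). Qed.

Lemma LM : L *m M = L.
Proof.
rewrite /L /clusterL /M mul_mxrow_mxdiag; apply: eq_mxrow => i.
by rewrite -mulmxA rproj_id // Q_free.
Qed.

Lemma M_tr : M^T = M.
Proof. by rewrite /M tr_mxdiag; apply: eq_mxdiag => i; rewrite rproj_tr. Qed.

Lemma rowV_M : rowV L *m (rowV L)^T = M.
Proof.
have [VV /andP[/submxP[C eC] sLV]] := rowV_spec L.
have [A eA] := submxP (submx_trans M_sub sLV).
have h1 : (rowV L)^T *m M = (rowV L)^T by rewrite eC -mulmxA LM.
have h2 : M *m rowV L = rowV L.
  by rewrite -M_tr -[RHS]trmxK -h1 trmx_mul trmxK.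
have : A = rowV L by rewrite -h2 eA -mulmxA VV mulmx1.
by move=> eAV; rewrite eA eAV.
Qed.

Lemma diagM i j : M (Rank i j) (Rank i j) = rproj (Q i) j j.
Proof.
have := submxblock_diag (fun i => rproj (Q i)) i.
by move/matrixP/(_ j j); rewrite !mxE.
Qed.

Lemma trace_rproj i : \tr (rproj (Q i)) = k%:R.
Proof.
rewrite /rproj mxtrace_mulC mulmxA mulmxV ?mxtrace1 //.
by apply: free_gram_unit; exact: Q_free.
Qed.

Lemma mu_lb i0 : (0 < k)%N -> (0 < n)%N -> (0 < nn i0)%N ->
  (\sum_(i < n) nn i)%:R / (n%:R * (nn i0)%:R) <= mu_v L.
Proof.
move=> k0 n0 m0.
set mx := \big[Num.max/0]_(b < \sum_(i < n) nn i) M b b.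
have -> : mu_v L = (\sum_(i < n) nn i)%:R / (n * k)%N%:R * mx.
  rewrite /mu_v (_ : ((\rank L)%:R : R) = (n * k)%N%:R) ?rkL // /mx; congr (_ * _); apply: eq_bigr => b _.
  by rewrite -rowV_M mxE; apply: eq_bigr => j _; rewrite mxE expr2.
have hmx : k%:R <= (nn i0)%:R * mx.
  rewrite -(trace_rproj i0) /mxtrace.
  have -> : (nn i0)%:R * mx = \sum_(j < nn i0) mx by rewrite sumr_const card_ord mulr_natl.
  apply: ler_sum => j _; rewrite -diagM.
  by rewrite /mx (bigD1 (Rank i0 j)) //= le_max lexx.
have nn0 : 0 < (nn i0)%:R :> R by rewrite ltr0n.
have n0' : 0 < n%:R :> R by rewrite ltr0n.
have k0' : 0 < k%:R :> R by rewrite ltr0n.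
have -> : (\sum_(i < n) nn i)%:R / (n%:R * (nn i0)%:R)
  = (\sum_(i < n) nn i)%:R / (n * k)%N%:R * (k%:R / (nn i0)%:R) :> R.
  by rewrite natrM; field; rewrite ?gt_eqF //; apply/andP; split; rewrite gt_eqF.
apply: ler_wpM2l; first by rewrite divr_ge0 // ler0n.
by rewrite ler_pdivrMr // mulrC.
Qed.
End Block.

Section Det.
Variable R : realType.
Variables (N1 N2 : nat).

Definition cond (L : 'M[R]_(N1, N2)) r (f : 'I_r -> 'I_N1) : Prop :=
  \det (rowsub f L *m (rowsub f L)^T) != 0 /\
  L *m ((rowsub f L)^T *m \adj (rowsub f L *m (rowsub f L)^T) *m rowsub f L)
  = \det (rowsub f L *m (rowsub f L)^T) *: L.

Definition formula (L : 'M[R]_(N1, N2)) r (f : 'I_r -> 'I_N1) : R :=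
  N2%:R / r%:R * \big[Num.max/0]_(b < N2)
   ((\det (rowsub f L *m (rowsub f L)^T))^-1 *
    ((rowsub f L)^T *m \adj (rowsub f L *m (rowsub f L)^T) *m rowsub f L) b b).

Lemma rproj_adj r (X : 'M[R]_(r, N2)) : \det (X *m X^T) != 0 ->
  rproj X = (\det (X *m X^T))^-1 *: (X^T *m \adj (X *m X^T) *m X).
Proof.
move=> d0; rewrite /rproj /invmx unitmxE unitfE d0.
by rewrite -scalemxAr -scalemxAl.
Qed.

Lemma char_cond (L : 'M[R]_(N1, N2)) r (f : 'I_r -> 'I_N1) :
  cond L f -> \rank L = r /\ mu_v L = formula L f.
Proof.
set X := rowsub f L => -[d0 hL].
have uG : X *m X^T \in unitmx by rewrite unitmxE unitfE.
have fX : row_free X.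
  rewrite /row_free eqn_leq rank_leq_row /=.
  have := mxrankM_maxl X X^T; move: uG; rewrite -row_free_unit => /eqP ->.
  by [].
have LP : L *m rproj X = L.
  by rewrite rproj_adj // -scalemxAr hL scalerA mulVf // scale1r.
have eXL : (X == L)%MS.
  apply/andP; split; first exact: rowsub_sub.
  by rewrite -LP /rproj mulmxA submxMl.
have rk : \rank L = r by rewrite -(eqmxP eXL) (eqP fX).
split => //; rewrite (mu_vE fX eXL) rk /formula; congr (_ * _).
by apply: eq_bigr => b _; rewrite rproj_adj // mxE.
Qed.

Lemma cover (L : 'M[R]_(N1, N2)) :
  exists r : 'I_N1.+1, exists f : {ffun 'I_r -> 'I_N1}, cond L f.
Proof.
have hr : (\rank L < N1.+1)%N by rewrite ltnS rank_leq_row.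
exists (Ordinal hr), (maxrankfun L) => /=.
set X := rowsub (maxrankfun L) L.
have fX : row_free X by exact: maxrowsub_free.
have uG := free_gram_unit fX.
have d0 : \det (X *m X^T) != 0 by rewrite -unitfE -unitmxE.
split => //.
have sLX : (L <= X)%MS by rewrite (eq_maxrowsub L).
have [D eD] := submxP sLX.
have -> : X^T *m \adj (X *m X^T) *m X = \det (X *m X^T) *: rproj X.
  by rewrite rproj_adj // scalerA mulfV // scale1r.
rewrite -scalemxAr; congr (_ *: _).
have -> : L *m rproj X = D *m X *m rproj X by congr (_ *m _).
by rewrite -mulmxA rproj_id //; exact: esym eD.
Qed.
End Det.

Local Open Scope classical_set_scope.

Section Meas.
Context d (T : measurableType d) (R : realType).

Definition mxm a b (F : T -> 'M[R]_(a, b)) :=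
  forall i j, measurable_fun setT (fun w => F w i j).

Lemma mxm_mul a b c (F : T -> 'M[R]_(a, b)) (G : T -> 'M[R]_(b, c)) :
  mxm F -> mxm G -> mxm (fun w => F w *m G w).
Proof.
move=> mF mG i k.
have -> : (fun w => (F w *m G w) i k) = (fun w => \sum_(j <- index_enum 'I_b) (F w i j * G w j k)).
  by apply/funext => w; rewrite mxE.
by apply: measurable_sum => j; apply: measurable_realfun.measurable_funM.
Qed.

Lemma mxm_tr a b (F : T -> 'M[R]_(a, b)) : mxm F -> mxm (fun w => (F w)^T).
Proof.
move=> mF i j; have -> : (fun w => (F w)^T i j) = (fun w => F w j i).
  by apply/funext => w; rewrite mxE.
exact: mF.
Qed.

Lemma mxm_rowsub a b c (f : 'I_c -> 'I_a) (F : T -> 'M[R]_(a, b)) :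
  mxm F -> mxm (fun w => rowsub f (F w)).
Proof.
move=> mF i j; have -> : (fun w => rowsub f (F w) i j) = (fun w => F w (f i) j).
  by apply/funext => w; rewrite mxE.
exact: mF.
Qed.

Lemma mxm_scale a b (s : T -> R) (F : T -> 'M[R]_(a, b)) :
  measurable_fun setT s -> mxm F -> mxm (fun w => s w *: F w).
Proof.
move=> ms mF i j; have -> : (fun w => (s w *: F w) i j) = (fun w => s w * F w i j).
  by apply/funext => w; rewrite mxE.
exact: measurable_realfun.measurable_funM.
Qed.

Lemma mxm_sub a b (F G : T -> 'M[R]_(a, b)) :
  mxm F -> mxm G -> mxm (fun w => F w - G w).
Proof.
move=> mF mG i j; have -> : (fun w => (F w - G w) i j) = (fun w => F w i j - G w i j).
  by apply/funext => w; rewrite !mxE.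
exact: measurable_realfun.measurable_funB.
Qed.

Lemma meas_det n (F : T -> 'M[R]_n) : mxm F ->
  measurable_fun setT (fun w => \det (F w)).
Proof.
move=> mF; rewrite /determinant.
apply: measurable_sum => s; apply: measurable_realfun.measurable_funM; first exact: measurable_cst.
by apply: measurable_prod => i _; exact: mF.
Qed.

Lemma mxm_adj n (F : T -> 'M[R]_n) : mxm F -> mxm (fun w => \adj (F w)).
Proof.
move=> mF i j.
have -> : (fun w => \adj (F w) i j) =
  (fun w => (-1) ^+ (j + i) * \det (row' j (col' i (F w)))).
  by apply/funext => w; rewrite mxE.
apply: measurable_realfun.measurable_funM; first exact: measurable_cst.
apply: meas_det => a b.
have -> : (fun w => row' j (col' i (F w)) a b) = (fun w => F w (lift j a) (lift i b)).
  by apply/funext => w; rewrite !mxE.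
exact: mF.
Qed.

Lemma meas_inv : measurable_fun setT (@GRing.inv R).
Proof.
have -> : (@GRing.inv R) = (fun x => if x == 0 then 0 else x^-1).
  by apply/funext => x; case: eqP => // ->; rewrite invr0.
apply: measurable_fun_if => //.
- apply: measurable_realfun.measurable_fun_eqr => //; exact: measurable_cst.
rewrite (_ : _ `&` _ = ~` [set 0]); last first.
  by apply/seteqP; split => x /=; [move=> [_ /negbT/eqP]|move=> /eqP/negPf ->].
apply: measurable_realfun.open_continuous_measurable_fun.
  by apply: closed_openC; exact: (@closed_eq _ 0).
move=> x; rewrite inE /= => /eqP x0; exact: inv_continuous.
Qed.

Lemma meas_neq0 (g : T -> R) : measurable_fun setT g -> measurable [set w | g w != 0].
Proof.
move=> mg; have := mg measurableT _ (@measurable_set1 R 0).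
rewrite setTI => h; have := measurableC h.
suff -> : [set w | g w != 0] = ~` (g @^-1` [set 0]) by [].
by apply/seteqP; split => w /= /eqP.
Qed.

Lemma meas_lt (g : T -> R) c : measurable_fun setT g -> measurable [set w | g w < c].
Proof.
move=> mg; have := mg measurableT _ (measurable_itv `]-oo, c[%R).
rewrite setTI.
suff -> : [set w | g w < c] = g @^-1` [set` `]-oo, c[%R] by [].
by apply/seteqP; split => w /=; rewrite in_itv.
Qed.

Lemma meas_eq0 (g : T -> R) : measurable_fun setT g -> measurable [set w | g w = 0].
Proof.
move=> mg; have := mg measurableT _ (@measurable_set1 R 0).
by rewrite setTI.
Qed.

Lemma meas_max n (h : 'I_n -> T -> R) : (forall i, measurable_fun setT (h i)) ->
  measurable_fun setT (fun w => \big[Num.max/0]_(i < n) h i w).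
Proof.
move=> mh; rewrite /index_enum; elim: (Finite.enum _) => [|x s IH].
  by under eq_fun do rewrite big_nil; exact: measurable_cst.
under eq_fun do rewrite big_cons.
exact: measurable_realfun.measurable_maxr.
Qed.
End Meas.

Lemma sqsum0 (R : realType) a b (Y : 'M[R]_(a, b)) :
  \sum_(i < a) \sum_(j < b) Y i j ^+ 2 = 0 <-> Y = 0.
Proof.
split => [h|->]; last by rewrite big1 // => i _; rewrite big1 // => j _; rewrite mxE expr0n.
apply/matrixP => i j; rewrite mxE.
move/eqP: h; rewrite psumr_eq0; last by move=> i' _; apply: sumr_ge0 => j' _; exact: sqr_ge0.
move=> /allP /(_ i (mem_index_enum _)) /=; rewrite psumr_eq0; last by move=> j' _; exact: sqr_ge0.
by move=> /allP /(_ j (mem_index_enum _)) /=; rewrite sqrf_eq0 => /eqP.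
Qed.

Lemma bigmin_le n (F : 'I_n -> nat) x0 : (0 < n)%N -> (forall i, F i <= x0)%N ->
  exists i, (F i <= \big[minn/x0]_(j < n) F j)%N.
Proof.
move=> n0 hF.
apply: (big_ind (fun v => exists i, F i <= v)%N).
- by exists (Ordinal n0); exact: hF.
- move=> x y [i hi] [j hj] /=; case: (leqP x y) => hxy.
    by exists i.
  by exists j.
- by move=> i _; exists i.
Qed.

Lemma bigmin_gt0 n (F : 'I_n -> nat) x0 : (0 < x0)%N -> (forall i, 0 < F i)%N ->
  (0 < \big[minn/x0]_(j < n) F j)%N.
Proof.
move=> x00 hF; apply: (big_ind (fun v => 0 < v)%N) => // x y hx hy.
by rewrite leq_min hx hy.
Qed.

Unset Implicit Arguments. Set Strict Implicit. Set Printing Implicit Defensive.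

Theorem lemma2 (R : realType) (d : measure_display) (T : measurableType d)
  (P : probability T R) (N1 n k : nat) (nn : 'I_n -> nat)
  (U : 'I_n -> T -> 'M[R]_(N1, k)) (Q : forall i : 'I_n, T -> 'M[R]_(k, nn i))
  (n_gt0 : (0 < n)%N) (k_gt0 : (0 < k)%N) (nn_gt0 : forall i, (0 < nn i)%N)
  (U_meas : forall i, rand_mx (U i)) (Q_meas : forall i, rand_mx (Q i))
  (U_unif : forall i, unif_rowspace P (fun w => (U i w)^T))
  (Q_unif : forall i, unif_rowspace P (Q i))
  (UQ_indep : indep_mx P (UQfam U Q))
  (rankL : P [set w | \rank (clusterL (fun i => U i w) (fun i => Q i w)) != (n * k)%N]
           = 0%E)
  (hk : (18 : R) * ln ((\max_(i < n) nn i)%N)%:R <= k%:R)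
  (hni : forall i, (96 : R) * k%:R * ln (nn i)%:R <= (nn i)%:R) :
  (P [set w | (mu_v (clusterL (fun i => U i w) (fun i => Q i w)) <
             (n%:R : R)^-1 * (1/2 * (\sum_(i < n) nn i)%:R /
                        (\big[minn/(\sum_(i < n) nn i)%N]_(i < n) nn i)%:R))%R]
   <= ((2 : R) * \sum_(i < n) ((nn i)%:R ^- 5))%R%:E)%E.
Proof.
set N2 := (\sum_(i < n) nn i)%N.
set mn := \big[minn/N2]_(i < n) nn i.
set c := (n%:R : R)^-1 * (1/2 * N2%:R / mn%:R).
pose Lw w := clusterL (fun i => U i w) (fun i => Q i w).
have nnN2 : forall i, (nn i <= N2)%N.
  by move=> i; rewrite /N2 (bigD1 i) //= leq_addr.
have [i0 hi0] := bigmin_le n_gt0 nnN2.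
have N20 : (0 < N2)%N by apply: leq_trans (nnN2 i0); exact: nn_gt0.
have mn0 : (0 < mn)%N by apply: bigmin_gt0.
have mL : mxm Lw.
  move=> a b; rewrite /Lw /clusterL /mxrow.
  under eq_fun do rewrite mxE.
  exact: (mxm_mul (U_meas _) (Q_meas _)).
have mcond : forall r (f : {ffun 'I_r -> 'I_N1}),
    measurable [set w | cond (Lw w) f].
  move=> r f.
  have mX : mxm (fun w => rowsub f (Lw w)) by exact: mxm_rowsub.
  have mG := mxm_mul mX (mxm_tr mX).
  have mdet := meas_det mG.
  have mP' := mxm_mul (mxm_mul (mxm_tr mX) (mxm_adj mG)) mX.
  have mY := mxm_sub (mxm_mul mL mP') (mxm_scale mdet mL).
  rewrite (_ : [set w | cond (Lw w) f] = [set w | \det (rowsub f (Lw w) *m (rowsub f (Lw w))^T) != 0] `&`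
     [set w | \sum_(a < N1) \sum_(b < N2) ((Lw w *m ((rowsub f (Lw w))^T *m \adj (rowsub f (Lw w) *m (rowsub f (Lw w))^T) *m rowsub f (Lw w)) -
      \det (rowsub f (Lw w) *m (rowsub f (Lw w))^T) *: Lw w) a b) ^+ 2 = 0]).
    apply: measurableI; first exact: meas_neq0.
    apply: meas_eq0; apply: measurable_sum => a; apply: measurable_sum => b.
    exact: measurable_realfun.measurable_funX.
  apply/seteqP; split => w /=.
    by move=> [h1 h2]; split => //; apply/sqsum0; rewrite h2 subrr.
  by move=> [h1 /sqsum0 /eqP]; rewrite subr_eq0 => /eqP h2; split.
have mform : forall r (f : {ffun 'I_r -> 'I_N1}),
    measurable_fun setT (fun w => formula (Lw w) f).
  move=> r f.
  have mX : mxm (fun w => rowsub f (Lw w)) by exact: mxm_rowsub.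
  have mG := mxm_mul mX (mxm_tr mX).
  have mdet := meas_det mG.
  have mP' := mxm_mul (mxm_mul (mxm_tr mX) (mxm_adj mG)) mX.
  rewrite /formula; apply: measurable_realfun.measurable_funM.
    exact: measurable_cst.
  apply: meas_max => b; apply: measurable_realfun.measurable_funM => //.
  by have := measurableT_comp (@meas_inv R) mdet.
pose E := [set w | mu_v (Lw w) < c].
pose A := [set w | \rank (Lw w) != (n * k)%N].
have eE : E = \bigcup_(r in [set: 'I_N1.+1]) \bigcup_(f in [set: {ffun 'I_r -> 'I_N1}])
   ([set w | cond (Lw w) f] `&` [set w | formula (Lw w) f < c]).
  apply/seteqP; split => w /=.
    move=> hw; have [r [f hc]] := cover (Lw w).
    exists r => //; exists f => //; split => //.
    by have [_ e] := char_cond hc; rewrite /= -e; exact: hw.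
  move=> [r _ [f _ [hc hf]]].
  by have [_ e] := char_cond hc; rewrite /E /= e.
have eA : A = \bigcup_(r in [set r : 'I_N1.+1 | (r : nat) != (n * k)%N])
   \bigcup_(f in [set: {ffun 'I_r -> 'I_N1}]) [set w | cond (Lw w) f].
  apply/seteqP; split => w /=.
    move=> hw; have [r [f hc]] := cover (Lw w).
    have [rk _] := char_cond hc.
    by exists r; [rewrite /= -rk | exists f].
  move=> [r hr [f _ hc]].
  by have [rk _] := char_cond hc; rewrite /A /= rk.
have mE : measurable E.
  rewrite eE; apply: fin_bigcup_measurable; first exact: finite_finset.
  move=> r _; apply: fin_bigcup_measurable; first exact: finite_finset.
  move=> f _; apply: measurableI; first exact: mcond.
  exact: meas_lt.
have mA : measurable A.
  rewrite eA; apply: fin_bigcup_measurable; first exact: finite_finset.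
  move=> r _; apply: fin_bigcup_measurable; first exact: finite_finset.
  by move=> f _; exact: mcond.
have EA : E `<=` A.
  move=> w; rewrite /E /A /= => hw; apply/negP => /eqP rk.
  have := mu_lb rk k_gt0 n_gt0 (nn_gt0 i0).
  rewrite -/N2 => hlb.
  have : c < N2%:R / (n%:R * (nn i0)%:R).
    have a0 : (0 : R) < N2%:R by rewrite ltr0n.
    have b0 : (0 : R) < n%:R by rewrite ltr0n.
    have m0 : (0 : R) < mn%:R by rewrite ltr0n.
    have q0 : (0 : R) < (nn i0)%:R by rewrite ltr0n.
    have qm : ((nn i0)%:R : R) <= mn%:R by rewrite ler_nat.
    have e1 : c = N2%:R / (n%:R * mn%:R) / 2.
      by rewrite /c; field; rewrite ?gt_eqF //; apply/andP; split; rewrite gt_eqF.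
    have h1 : N2%:R / (n%:R * mn%:R) <= N2%:R / (n%:R * (nn i0)%:R) :> R.
      rewrite ler_pM2l // lef_pV2 ?posrE ?mulr_gt0 // ler_pM2l //.
    have x0 : 0 < N2%:R / (n%:R * mn%:R) :> R by rewrite divr_gt0 // mulr_gt0.
    rewrite e1; move: h1 x0.
    set x := N2%:R / (n%:R * mn%:R); set y := N2%:R / _.
    move=> h1 x0; lra.
  move=> hc; have := lt_trans hw (lt_le_trans hc hlb).
  by rewrite ltxx.
have PA0 : P A = 0%E := rankL.
have h := le_measure P (mem_set mE) (mem_set mA) EA.
apply: le_trans h _; apply: (@le_trans _ _ 0%E).
  exact: (eq_ind 0%E (fun x => (x <= 0)%E) (lexx _) _ (esym PA0)).
rewrite lee_fin; apply: mulr_ge0 => //; apply: sumr_ge0 => i _.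
by rewrite invr_ge0 exprn_ge0 // ler0n.
Qed.
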